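(* Let $S_0,S_1\in\mathbb{R}$ and let $\pi_0,\pi_1>0$ with $\pi_0+\pi_1=1$ and $\pi_0\neq\pi_1$. For a real control signal $l$ and $\Delta>0$, consider the binary-input binary-output channel from $H\in\{0,1\}$ (with $\Pr(H=i)=\pi_i$) to $Y\in\{0,1\}$ given by $P_{Y|H}(0\mid i)=e^{-\lambda_i\Delta}$, $P_{Y|H}(1\mid i)=1-e^{-\lambda_i\Delta}$, where $\lambda_i=(S_i+l)^2$, and let $I_l(\Delta)=I(H;Y)$ be its mutual information. Then, in the limit of infinitesimal interval $\Delta\to 0$, the choice of $l$ maximizing the mutual information $I(H;Y)$ is $$l^*=\frac{S_0\pi_0-S_1\pi_1}{\pi_1-\pi_0},$$ in the sense that $\lim_{\Delta\to 0}I_{l^*}(\Delta)/\Delta\ \ge\ \lim_{\Delta\to0} I_l(\Delta)/\Delta$ for every real $l$; and with this choice, $\pi_0\sqrt{\lambda_0}=\pi_1\sqrt{\lambda_1}$.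
   Context: $\lambda_i$ is the rate of the Poisson photon-arrival process at the detector under hypothesis $H=i$ when the received coherent-state amplitude $S_i$ is displaced by the local control amplitude $l$; $Y$ indicates zero or one photon arrival in an interval of length $\Delta$. Mutual information is in nats. *)

(* Defs.v *)
From Stdlib Require Import Reals.
From Coquelicot Require Import Coquelicot.
Open Scope R_scope.

Definition plogr (p q : R) : R :=
  if Req_EM_T p 0 then 0 else p * ln (p / q).

Definition rate (S l : R) : R := (S + l) ^ 2.

Definition p_click (S l Delta : R) : R := 1 - exp (- (rate S l * Delta)).

(* Mutual information I(H;Y) (nats) of the binary channel with prior
   (pi0, pi1) and P(Y=1|H=i) = q_i:
   I = sum_{i,y} pi_i P(y|i) ln (P(y|i) / P(y)). *)
Definition binMI (pi0 pi1 q0 q1 : R) : R :=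
  let py1 := pi0 * q0 + pi1 * q1 in
  let py0 := pi0 * (1 - q0) + pi1 * (1 - q1) in
  pi0 * plogr (1 - q0) py0 + pi0 * plogr q0 py1
  + pi1 * plogr (1 - q1) py0 + pi1 * plogr q1 py1.

Definition MI_l (S0 S1 pi0 pi1 l Delta : R) : R :=
  binMI pi0 pi1 (p_click S0 l Delta) (p_click S1 l Delta).

(* Main.v *)
Require Import Defs.
From Stdlib Require Import Reals Lra.
From Coquelicot Require Import Coquelicot.
Open Scope R_scope.


Lemma mono_up (f f' : R -> R) a b : a <= b ->
  (forall t, a <= t <= b -> is_derive f t (f' t)) ->
  (forall t, a <= t <= b -> 0 <= f' t) -> f a <= f b.
Proof.
  intros Hab Hd Hp.
  destruct (MVT_gen f a b f') as [c [Hc E]].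
  - intros x Hx. apply Hd. rewrite Rmin_left in Hx by lra. rewrite Rmax_right in Hx by lra. lra.
  - intros x Hx. rewrite Rmin_left in Hx by lra. rewrite Rmax_right in Hx by lra.
    apply derivable_continuous_pt. exists (f' x). apply is_derive_Reals. apply Hd. lra.
  - rewrite Rmin_left in Hc by lra. rewrite Rmax_right in Hc by lra.
    assert (0 <= f' c * (b - a)) by (apply Rmult_le_pos; [apply Hp; lra | lra]). lra.
Qed.

Lemma mono_down (f f' : R -> R) a b : a <= b ->
  (forall t, a <= t <= b -> is_derive f t (f' t)) ->
  (forall t, a <= t <= b -> f' t <= 0) -> f b <= f a.
Proof.
  intros Hab Hd Hp.
  assert (- f a <= - f b); [|lra].
  apply (mono_up (fun x => - f x) (fun x => - f' x)); auto.
  - intros t Ht. apply is_derive_Reals. apply (derivable_pt_lim_opp f). apply is_derive_Reals. auto.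
  - intros t Ht. specialize (Hp t Ht). lra.
Qed.

Lemma ln_le_xm1 x : 0 < x -> ln x <= x - 1.
Proof. intros. pose proof (exp_ineq1_le (ln x)). rewrite exp_ln in H0; lra. Qed.

Lemma ln_ge2 x : 1 <= x -> 2 * (x - 1) / (x + 1) <= ln x.
Proof.
  intros Hx.
  assert (H: (fun t => ln t - 2 * (t - 1) / (t + 1)) 1 <= (fun t => ln t - 2 * (t - 1) / (t + 1)) x).
  { apply (mono_up (fun t => ln t - 2 * (t - 1) / (t + 1)) (fun t => (t - 1)^2 / (t * (t+1)^2)) 1 x); auto.
    - intros t Ht. auto_derive. split; [lra|split;[lra|auto]]. field. lra.
    - intros t Ht. apply Rmult_le_pos. apply pow2_ge_0. left. apply Rinv_0_lt_compat.
      apply Rmult_lt_0_compat; [lra|]. apply pow_lt; lra. }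
  simpl in H. rewrite ln_1 in H. lra.
Qed.

Section F.
Set Default Proof Using "All".
Variables a b : R.
Hypothesis Ha : 0 < a.
Hypothesis Hab : a < b.
Hypothesis Hsum : a + b = 1.

Definition Lg := ln (b / a).
Definition K := a * b * Lg / (b - a).
Definition lam u := a * u ^ 2 + b.
Definition Fu u := K * (u - 1) ^ 2 - a * u ^ 2 * (2 * ln u - ln (lam u)) + b * ln (lam u).
Definition Hu u := K * (1 - / u) - a * (2 * ln u - ln (lam u)).
Definition Qu u := K * a * u ^ 2 - 2 * a * b * u + K * b.

Lemma Lg_bounds : a * Lg <= b - a /\ b - a <= b * Lg /\ 2 * (b - a) <= Lg.
Proof.
  unfold Lg.
  assert (Hb : 0 < b) by lra.
  assert (H1 := ln_le_xm1 (b / a) ltac:(apply Rdiv_lt_0_compat; lra)).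
  assert (H2 := ln_le_xm1 (a / b) ltac:(apply Rdiv_lt_0_compat; lra)).
  assert (E : ln (a / b) = - ln (b / a)).
  { rewrite !ln_div by lra. ring. }
  rewrite E in H2.
  assert (H3 := ln_ge2 (b / a) ltac:(apply Rcomplements.Rle_div_r; lra)).
  split; [|split].
  - assert (a * (b / a - 1) = b - a) by (field; lra). nra.
  - assert (b * (a / b - 1) = a - b) by (field; lra). nra.
  - assert (2 * (b / a - 1) / (b / a + 1) = 2 * (b - a) / (b + a)) by (field; lra).
    rewrite (Rplus_comm b a), Hsum in H. lra.
Qed.

Lemma K_eq : K * (b - a) = a * b * Lg.
Proof. unfold K. field. lra. Qed.

Lemma K_bounds : a <= K /\ K <= b /\ 2 * a * b <= K.
Proof.
  destruct Lg_bounds as [B1 [B2 B3]]. pose proof K_eq.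
  assert (Hb : 0 < b) by lra.
  split; [|split].
  - apply (Rmult_le_reg_r (b - a)); [lra|]. rewrite H.
    assert (0 <= a * (b * Lg - (b - a))) by (apply Rmult_le_pos; lra). nra.
  - apply (Rmult_le_reg_r (b - a)); [lra|]. rewrite H.
    assert (0 <= b * ((b - a) - a * Lg)) by (apply Rmult_le_pos; lra). nra.
  - apply (Rmult_le_reg_r (b - a)); [lra|]. rewrite H.
    assert (0 <= a * b * (Lg - 2 * (b - a))) by (apply Rmult_le_pos; [nra|lra]). nra.
Qed.

Lemma lam_pos u : 0 < lam u.
Proof. unfold lam. pose proof (pow2_ge_0 u). nra. Qed.

Lemma F_deriv t : 0 < t -> is_derive Fu t (2 * t * Hu t).
Proof.
  intros Ht. pose proof (lam_pos t). unfold Fu, Hu. unfold lam in *.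
  auto_derive. repeat split; lra.
  replace (a * t ^ 2 + b) with (a * (t * (t * 1)) + b) in * by ring.
  field. split; lra.
Qed.

Lemma H_deriv t : 0 < t -> is_derive Hu t (Qu t / (t ^ 2 * lam t)).
Proof.
  intros Ht. pose proof (lam_pos t). unfold Qu, Hu. unfold lam in *.
  auto_derive. repeat split; lra.
  field. split; lra.
Qed.

Lemma K_pos : 0 < K.
Proof. destruct K_bounds as [? _]. lra. Qed.

Lemma F1 : Fu 1 = 0.
Proof. unfold Fu, lam. replace (a * 1 ^ 2 + b) with 1 by lra. rewrite ln_1. ring. Qed.
Lemma H1 : Hu 1 = 0.
Proof. unfold Hu, lam. replace (a * 1 ^ 2 + b) with 1 by lra. rewrite ln_1. field. Qed.

Lemma lam_us : lam (b / a) = b / a.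
Proof. unfold lam. transitivity (b * (a + b) / a); [field; lra|rewrite Hsum; field; lra]. Qed.

Lemma Fus : Fu (b / a) = 0.
Proof.
  unfold Fu. rewrite lam_us. fold Lg.
  replace (K * (b / a - 1) ^ 2) with ((K * (b - a)) * (b - a) / a ^ 2) by (field; lra).
  rewrite K_eq. field. lra.
Qed.
Lemma Hus : Hu (b / a) = 0.
Proof.
  unfold Hu. rewrite lam_us. fold Lg.
  replace (K * (1 - / (b / a))) with ((K * (b - a)) / b) by (field; lra).
  rewrite K_eq. field. lra.
Qed.

Lemma Q1 : 0 <= Qu 1.
Proof. destruct K_bounds as [_ [_ B]]. unfold Qu. nra. Qed.
Lemma Qus : 0 <= Qu (b / a).
Proof.
  destruct K_bounds as [_ [_ B]]. unfold Qu.
  replace (K * a * (b / a) ^ 2 - 2 * a * b * (b / a) + K * b) with ((b / a) * (K * (a + b) - 2 * a * b)) by (field; lra).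
  rewrite Hsum. apply Rmult_le_pos; [|lra]. apply Rlt_le, Rdiv_lt_0_compat; lra.
Qed.

Lemma v_bounds : 1 <= b / K /\ b / K <= b / a.
Proof.
  destruct K_bounds as [B1 [B2 _]]. split.
  - apply Rcomplements.Rle_div_r; lra.
  - apply Rcomplements.Rle_div_l; [lra|]. unfold Rdiv.
    rewrite Rmult_assoc, (Rmult_comm (/ a)), <- Rmult_assoc.
    apply Rcomplements.Rle_div_r; [lra|]. nra.
Qed.

Lemma Q_dec s t : s <= t -> t <= b / K -> Qu t <= Qu s.
Proof.
  intros. pose proof K_pos.
  assert (K * t <= b) by (apply Rcomplements.Rle_div_r in H0; lra).
  assert (K * s <= b) by nra.
  assert (E : Qu s - Qu t = (t - s) * (a * ((b - K * s) + (b - K * t)))) by (unfold Qu; ring).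
  assert (0 <= (t - s) * (a * ((b - K * s) + (b - K * t)))) by (apply Rmult_le_pos; [lra|apply Rmult_le_pos; lra]).
  lra.
Qed.

Lemma Q_inc s t : b / K <= s -> s <= t -> Qu s <= Qu t.
Proof.
  intros. pose proof K_pos.
  assert (b <= K * s) by (apply Rcomplements.Rle_div_l in H; lra).
  assert (b <= K * t) by nra.
  assert (E : Qu t - Qu s = (t - s) * (a * ((K * s - b) + (K * t - b)))) by (unfold Qu; ring).
  assert (0 <= (t - s) * (a * ((K * s - b) + (K * t - b)))) by (apply Rmult_le_pos; [lra|apply Rmult_le_pos; lra]).
  lra.
Qed.

Lemma Q_conv t1 s t2 : t1 <= s <= t2 -> Qu t1 < 0 -> Qu t2 < 0 -> Qu s < 0.
Proof.
  intros Hs Q1' Q2'. pose proof K_pos.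
  destruct (Req_dec s t2) as [->|Hne]; auto.
  assert (E : (t2 - t1) * Qu s = (t2 - s) * Qu t1 + (s - t1) * Qu t2 + K * a * (t2 - t1) * (s - t1) * (s - t2)) by (unfold Qu; ring).
  assert ((t2 - s) * Qu t1 < 0) by (apply Rmult_gt_0_lt_0_compat_r; lra) || nra.
  assert ((s - t1) * Qu t2 <= 0) by nra.
  assert (0 <= K * a) by (apply Rmult_le_pos; lra).
  assert (0 <= K * a * (t2 - t1)) by (apply Rmult_le_pos; lra).
  assert (0 <= K * a * (t2 - t1) * (s - t1)) by (apply Rmult_le_pos; lra).
  assert (K * a * (t2 - t1) * (s - t1) * (s - t2) <= 0) by nra.
  assert ((t2 - t1) * Qu s < 0) by lra.
  nra.
Qed.

Lemma H_up s t : 0 < s -> s <= t -> (forall r, s <= r <= t -> 0 <= Qu r) -> Hu s <= Hu t.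
Proof.
  intros Hs Hst HQ.
  apply (mono_up Hu (fun r => Qu r / (r ^ 2 * lam r))); auto.
  - intros r Hr. apply H_deriv. lra.
  - intros r Hr. apply Rcomplements.Rdiv_le_0_compat. auto.
    apply Rmult_lt_0_compat. apply pow_lt; lra. apply lam_pos.
Qed.

Lemma H_down s t : 0 < s -> s <= t -> (forall r, s <= r <= t -> Qu r <= 0) -> Hu t <= Hu s.
Proof.
  intros Hs Hst HQ.
  apply (mono_down Hu (fun r => Qu r / (r ^ 2 * lam r))); auto.
  - intros r Hr. apply H_deriv. lra.
  - intros r Hr. unfold Rdiv. apply Rmult_le_0_r. auto.
    left. apply Rinv_0_lt_compat. apply Rmult_lt_0_compat. apply pow_lt; lra. apply lam_pos.
Qed.

Lemma F_up s t : 0 < s -> s <= t -> (forall r, s <= r <= t -> 0 <= Hu r) -> Fu s <= Fu t.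
Proof.
  intros Hs Hst HH.
  apply (mono_up Fu (fun r => 2 * r * Hu r)); auto.
  - intros r Hr. apply F_deriv. lra.
  - intros r Hr. apply Rmult_le_pos; [lra|auto].
Qed.

Lemma F_down s t : 0 < s -> s <= t -> (forall r, s <= r <= t -> Hu r <= 0) -> Fu t <= Fu s.
Proof.
  intros Hs Hst HH.
  apply (mono_down Fu (fun r => 2 * r * Hu r)); auto.
  - intros r Hr. apply F_deriv. lra.
  - intros r Hr. specialize (HH r Hr). nra.
Qed.

Lemma F_nonneg u : 0 < u -> 0 <= Fu u.
Proof.
  intros Hu0. destruct v_bounds as [V1 V2].
  pose proof Q1. pose proof Qus. pose proof F1. pose proof H1. pose proof Fus. pose proof Hus.
  assert (Hus0 : 1 < b / a) by (apply Rcomplements.Rlt_div_r; lra).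
  destruct (Rle_dec u 1) as [Hu1|Hu1].
  { rewrite <- F1. apply F_down; auto. intros t Ht. rewrite <- H1.
    apply H_up; try lra. intros r Hr. apply Rle_trans with (Qu 1); auto. apply Q_dec; lra. }
  destruct (Rle_dec (b / a) u) as [Hu2|Hu2].
  { rewrite <- Fus. apply F_up; auto; try lra. intros t Ht. rewrite <- Hus.
    apply H_up; try lra. intros r Hr. apply Rle_trans with (Qu (b / a)); auto. apply Q_inc; lra. }
  destruct (Rle_dec 0 (Qu u)) as [Qu0|Qu0].
  - destruct (Rle_dec u (b / K)) as [Hv|Hv].
    + rewrite <- F1. apply F_up; try lra. intros t Ht. rewrite <- H1.
      apply H_up; try lra. intros r Hr. apply Rle_trans with (Qu u); auto. apply Q_dec; lra.
    + rewrite <- Fus. apply F_down; try lra. intros t Ht. rewrite <- Hus.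
      apply H_up; try lra. intros r Hr. apply Rle_trans with (Qu u); auto. apply Q_inc; lra.
  - destruct (Rle_dec 0 (Hu u)) as [Hh|Hh].
    + rewrite <- F1. apply F_up; try lra. intros t Ht.
      destruct (Rle_dec 0 (Qu t)) as [Qt|Qt].
      * assert (t <= b / K).
        { destruct (Rle_dec t (b / K)); auto. exfalso. assert (Qu t <= Qu u) by (apply Q_inc; lra). lra. }
        rewrite <- H1. apply H_up; try lra. intros r Hr. apply Rle_trans with (Qu t); auto. apply Q_dec; lra.
      * apply Rle_trans with (Hu u); auto. apply H_down; try lra. intros r Hr.
        left. apply (Q_conv t r u); lra.
    + rewrite <- Fus. apply F_down; try lra. intros t Ht.
      destruct (Rle_dec 0 (Qu t)) as [Qt|Qt].
      * assert (b / K <= t).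
        { destruct (Rle_dec (b / K) t); auto. exfalso. assert (Qu t <= Qu u) by (apply Q_dec; lra). lra. }
        rewrite <- Hus. apply H_up; try lra. intros r Hr. apply Rle_trans with (Qu t); auto. apply Q_inc; lra.
      * apply Rle_trans with (Hu u); [|lra]. apply H_down; try lra. intros r Hr.
        left. apply (Q_conv u r t); lra.
Qed.
End F.

Definition LimF (p0 p1 y0 y1 : R) :=
  p0 * plogr (y0 ^ 2) (p0 * y0 ^ 2 + p1 * y1 ^ 2) + p1 * plogr (y1 ^ 2) (p0 * y0 ^ 2 + p1 * y1 ^ 2).

Lemma plogr0 q : plogr 0 q = 0.
Proof. unfold plogr. destruct (Req_EM_T 0 0); [auto|congruence]. Qed.

Lemma plogr_nz p q : p <> 0 -> plogr p q = p * ln (p / q).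
Proof. intros. unfold plogr. destruct (Req_EM_T p 0); [congruence|auto]. Qed.

Lemma endpoint a b : 0 < a -> a < b -> a + b = 1 ->
  a * ln (/ a) <= K a b /\ b * ln (/ b) <= K a b.
Proof.
  intros Ha Hab Hs.
  destruct (Lg_bounds a b Ha Hab Hs) as [_ [B2 _]].
  pose proof (K_eq a b Ha Hab Hs).
  assert (HL : Lg a b = ln b - ln a) by (unfold Lg; apply ln_div; lra).
  rewrite !ln_Rinv by lra.
  assert (Hb1 := ln_le_xm1 (/ b) ltac:(apply Rinv_0_lt_compat; lra)).
  rewrite ln_Rinv in Hb1 by lra.
  assert (b * - ln b <= a).
  { assert (b * (/ b - 1) = a) by (field_simplify; lra). nra. }
  assert (Key : a * ln a <= b * ln b).
  { assert (a * Lg a b * b >= (b - a) * a) by nra.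
    assert (a * Lg a b >= (b - a) * (- ln b)).
    { assert ((b - a) * (b * - ln b) <= (b - a) * a) by (apply Rmult_le_compat_l; lra).
      nra. }
    rewrite HL in H2. nra. }
  split.
  - apply (Rmult_le_reg_r (b - a)); [lra|]. rewrite H. rewrite HL. nra.
  - apply (Rmult_le_reg_r (b - a)); [lra|]. rewrite H. rewrite HL. nra.
Qed.

Lemma sq_abs_le x0 x1 : (Rabs x0 - Rabs x1) ^ 2 <= (x0 - x1) ^ 2.
Proof.
  assert (x0 * x1 <= Rabs x0 * Rabs x1) by (rewrite <- Rabs_mult; apply Rle_abs).
  assert (Rabs x0 ^ 2 = x0 ^ 2) by apply pow2_abs.
  assert (Rabs x1 ^ 2 = x1 ^ 2) by apply pow2_abs.
  nra.
Qed.

Lemma main_ineq a b x0 x1 : 0 < a -> a < b -> a + b = 1 ->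
  LimF a b x0 x1 <= K a b * (x0 - x1) ^ 2.
Proof.
  intros Ha Hab Hs.
  pose proof (K_pos a b Ha Hab Hs) as Kp.
  destruct (endpoint a b Ha Hab Hs) as [E1 E2].
  unfold LimF.
  destruct (Req_dec x1 0) as [Z1|Z1]; destruct (Req_dec x0 0) as [Z0|Z0].
  - subst. replace ((0:R) ^ 2) with 0 by ring. rewrite plogr0. nra.
  - subst. replace ((0:R) ^ 2) with 0 by ring. rewrite plogr0.
    assert (x0 ^ 2 <> 0) by (apply pow_nonzero; auto).
    rewrite plogr_nz by auto.
    replace (x0 ^ 2 / (a * x0 ^ 2 + b * 0)) with (/ a) by (field; split; lra).
    assert (0 <= x0 ^ 2) by apply pow2_ge_0.
    replace ((x0 - 0) ^ 2) with (x0 ^ 2) by ring.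
    assert (a * ln (/ a) * x0 ^ 2 <= K a b * x0 ^ 2) by (apply Rmult_le_compat_r; auto).
    nra.
  - subst. replace ((0:R) ^ 2) with 0 by ring. rewrite plogr0.
    assert (x1 ^ 2 <> 0) by (apply pow_nonzero; auto).
    rewrite plogr_nz by auto.
    replace (x1 ^ 2 / (a * 0 + b * x1 ^ 2)) with (/ b) by (field; split; lra).
    assert (0 <= x1 ^ 2) by apply pow2_ge_0.
    replace ((0 - x1) ^ 2) with (x1 ^ 2) by ring.
    assert (b * ln (/ b) * x1 ^ 2 <= K a b * x1 ^ 2) by (apply Rmult_le_compat_r; auto).
    nra.
  - assert (A1 : 0 < Rabs x1) by (apply Rabs_pos_lt; auto).
    assert (A0 : 0 < Rabs x0) by (apply Rabs_pos_lt; auto).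
    set (u := Rabs x0 / Rabs x1).
    assert (Hu : 0 < u) by (apply Rdiv_lt_0_compat; auto).
    assert (Eu : Rabs x0 = u * Rabs x1) by (unfold u; field; lra).
    assert (X0 : x0 ^ 2 = u ^ 2 * x1 ^ 2).
    { rewrite <- (pow2_abs x0), <- (pow2_abs x1), Eu. ring. }
    assert (X1 : 0 < x1 ^ 2) by (rewrite <- (pow2_abs x1); apply pow_lt; auto).
    pose proof (lam_pos a b Ha Hab Hs u) as Lp.
    assert (Lb : a * x0 ^ 2 + b * x1 ^ 2 = x1 ^ 2 * lam a b u) by (rewrite X0; unfold lam; ring).
    rewrite Lb.
    rewrite !plogr_nz by (try rewrite X0; nra).
    replace (x0 ^ 2 / (x1 ^ 2 * lam a b u)) with (u * u / lam a b u) by (rewrite X0; field; lra).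
    replace (x1 ^ 2 / (x1 ^ 2 * lam a b u)) with (/ lam a b u) by (field; lra).
    rewrite ln_Rinv by lra. rewrite ln_div by nra. rewrite ln_mult by lra.
    pose proof (F_nonneg a b Ha Hab Hs u Hu) as FN.
    assert (E : a * (x0 ^ 2 * (ln u + ln u - ln (lam a b u))) + b * (x1 ^ 2 * - ln (lam a b u))
              = x1 ^ 2 * (K a b * (u - 1) ^ 2 - Fu a b u)).
    { rewrite X0. unfold Fu. ring. }
    rewrite E.
    assert (x1 ^ 2 * (u - 1) ^ 2 = (Rabs x0 - Rabs x1) ^ 2).
    { rewrite Eu, <- (pow2_abs x1). ring. }
    pose proof (sq_abs_le x0 x1).
    assert (0 <= x1 ^ 2 * Fu a b u) by (apply Rmult_le_pos; lra).
    nra.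
Qed.

Lemma K_sym a b : 0 < a -> 0 < b -> a <> b -> K a b = K b a.
Proof.
  intros. unfold K, Lg.
  replace (a / b) with (/ (b / a)) by (field; split; lra).
  rewrite ln_Rinv by (apply Rdiv_lt_0_compat; lra).
  field. lra.
Qed.

Lemma LimF_sym a b x0 x1 : LimF a b x0 x1 = LimF b a x1 x0.
Proof. unfold LimF. rewrite (Rplus_comm (a * x0 ^ 2)). ring. Qed.

Lemma main_ineq2 a b x0 x1 : 0 < a -> 0 < b -> a <> b -> a + b = 1 ->
  LimF a b x0 x1 <= K a b * (x0 - x1) ^ 2.
Proof.
  intros. destruct (Rlt_dec a b).
  - apply main_ineq; auto.
  - rewrite LimF_sym, K_sym by auto. replace ((x0 - x1) ^ 2) with ((x1 - x0) ^ 2) by ring.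
    apply main_ineq; lra.
Qed.

Lemma LimF_opt a b c : 0 < a -> a < b -> a + b = 1 ->
  LimF a b (b * c) (a * c) = K a b * ((b - a) * c) ^ 2.
Proof.
  intros Ha Hab Hs.
  pose proof (K_eq a b Ha Hab Hs) as KE.
  destruct (Req_dec c 0) as [->|Hc].
  { unfold LimF. rewrite !Rmult_0_r. replace ((0:R) ^ 2) with 0 by ring. rewrite plogr0. ring. }
  unfold LimF.
  assert (C2 : 0 < c ^ 2) by (apply pow2_gt_0; auto) || (rewrite <- (pow2_abs c); apply pow_lt; apply Rabs_pos_lt; auto).
  rewrite !plogr_nz by (apply pow_nonzero; apply Rmult_integral_contrapositive; split; lra).
  replace ((b * c) ^ 2 / (a * (b * c) ^ 2 + b * (a * c) ^ 2)) with (b / a)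
    by (replace (a * (b * c) ^ 2 + b * (a * c) ^ 2) with (a * b * c ^ 2 * (a + b)) by ring; rewrite Hs; field; lra).
  replace ((a * c) ^ 2 / (a * (b * c) ^ 2 + b * (a * c) ^ 2)) with (/ (b / a))
    by (replace (a * (b * c) ^ 2 + b * (a * c) ^ 2) with (a * b * c ^ 2 * (a + b)) by ring; rewrite Hs; field; lra).
  rewrite ln_Rinv by (apply Rdiv_lt_0_compat; lra). fold (Lg a b).
  replace (K a b * ((b - a) * c) ^ 2) with ((K a b * (b - a)) * (b - a) * c ^ 2) by ring.
  rewrite KE. ring.
Qed.

Lemma lim_mult {T} (F : (T -> Prop) -> Prop) {FF : Filter F} f g x y :
  filterlim f F (locally x) -> filterlim g F (locally y) ->
  filterlim (fun t => f t * g t) F (locally (x * y)).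
Proof.
  intros Hf Hg. apply (filterlim_comp_2 f g Rmult Hf Hg). apply (filterlim_mult x y).
Qed.

Lemma lim_plus {T} (F : (T -> Prop) -> Prop) {FF : Filter F} f g x y :
  filterlim f F (locally x) -> filterlim g F (locally y) ->
  filterlim (fun t => f t + g t) F (locally (x + y)).
Proof.
  intros Hf Hg. apply (filterlim_comp_2 f g Rplus Hf Hg). apply (filterlim_plus x y).
Qed.

Lemma lim_minus {T} (F : (T -> Prop) -> Prop) {FF : Filter F} f g x y :
  filterlim f F (locally x) -> filterlim g F (locally y) ->
  filterlim (fun t => f t - g t) F (locally (x - y)).
Proof.
  intros Hf Hg.
  assert (H := lim_plus F f (fun t => (-1) * g t) x ((-1) * y) Hf (lim_mult F _ _ _ _ (filterlim_const (-1)) Hg)).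
  replace (x - y) with (x + -1 * y) by ring.
  eapply filterlim_ext; [|exact H]. intros t; simpl. ring.
Qed.

Lemma lim_ln {T} (F : (T -> Prop) -> Prop) {FF : Filter F} f x :
  0 < x -> filterlim f F (locally x) -> filterlim (fun t => ln (f t)) F (locally (ln x)).
Proof.
  intros Hx Hf. eapply filterlim_comp; [exact Hf|].
  apply (ex_derive_continuous ln x). auto_derive. auto.
Qed.

Lemma dq f d : is_derive f 0 d -> f 0 = 0 ->
  filterlim (fun x => f x / x) (at_right 0) (locally d).
Proof.
  intros Hd H0. apply is_derive_Reals in Hd.
  apply filterlim_locally. intros eps.
  destruct (Hd eps (cond_pos eps)) as [delta Hdel].
  exists delta. intros y Hy Hpos.
  change (Rabs (f y / y - d) < eps).
  assert (Hy' : Rabs y < delta).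
  { unfold ball in Hy; simpl in Hy; unfold AbsRing_ball, abs, minus, plus, opp in Hy; simpl in Hy.
    change (Rabs (y + - 0) < delta) in Hy. rewrite Ropp_0, Rplus_0_r in Hy. exact Hy. }
  specialize (Hdel y ltac:(lra) Hy').
  rewrite Rplus_0_l, H0, Rminus_0_r in Hdel. exact Hdel.
Qed.

Lemma q_deriv lam : is_derive (fun x => 1 - exp (- (lam * x))) 0 lam.
Proof. auto_derive; auto. rewrite Rmult_0_r, Ropp_0, exp_0. ring. Qed.

Lemma lim_y1 lam P Lb : 0 <= lam -> (0 < lam -> 0 < Lb) -> is_derive P 0 Lb -> P 0 = 0 ->
  (0 < lam -> forall x, 0 < x -> 0 < P x) ->
  filterlim (fun x => plogr (1 - exp (- (lam * x))) (P x) / x) (at_right 0) (locally (plogr lam Lb)).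
Proof.
  intros Hl HLb HP P0 Ppos.
  destruct (Req_dec lam 0) as [->|Hne].
  { unfold plogr at 2. destruct (Req_EM_T 0 0); [|congruence].
    eapply filterlim_ext; [|apply filterlim_const].
    intros x. simpl. rewrite Rmult_0_l, Ropp_0, exp_0, Rminus_diag.
    unfold plogr. destruct (Req_EM_T 0 0); [|congruence]. unfold Rdiv. ring. }
  assert (Hlp : 0 < lam) by lra. specialize (HLb Hlp).
  assert (HA := dq _ _ (q_deriv lam) ltac:(simpl; rewrite Rmult_0_r, Ropp_0, exp_0; ring)).
  assert (HB := dq _ _ HP P0).
  assert (Hlim := lim_mult _ _ _ _ _ HA (lim_minus _ _ _ _ _ (lim_ln _ _ _ Hlp HA) (lim_ln _ _ _ HLb HB))).
  replace (plogr lam Lb) with (lam * (ln lam - ln Lb)).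
  2:{ unfold plogr. destruct (Req_EM_T lam 0); [lra|]. rewrite ln_div; lra. }
  eapply filterlim_ext_loc; [|exact Hlim].
  exists (mkposreal 1 Rlt_0_1). intros x _ Hx. simpl in Hx.
  assert (E : exp (- (lam * x)) < 1).
  { rewrite <- exp_0. apply exp_increasing. nra. }
  assert (Pp := Ppos Hlp x Hx).
  assert (q0 : 0 < 1 - exp (- (lam * x))) by lra.
  unfold plogr. destruct (Req_EM_T (1 - exp (- (lam * x))) 0); [lra|].
  rewrite <- ln_div by (apply Rdiv_lt_0_compat; lra).
  replace ((1 - exp (- (lam * x))) / x / (P x / x)) with ((1 - exp (- (lam * x))) / P x) by (field; lra).
  unfold Rdiv. ring.
Qed.

Lemma exp_le1 l x : 0 <= l -> 0 <= x -> exp (- (l * x)) <= 1.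
Proof.
  intros. rewrite <- exp_0. destruct (Req_dec (l * x) 0) as [E|E].
  - rewrite E, Ropp_0. lra.
  - left. apply exp_increasing. assert (0 <= l * x) by (apply Rmult_le_pos; auto). lra.
Qed.

Lemma lim_y0 p0 p1 l0 l1 : 0 < p0 -> 0 < p1 -> p0 + p1 = 1 ->
  filterlim (fun x =>
    (p0 * plogr (exp (- (l0 * x))) (p0 * exp (- (l0 * x)) + p1 * exp (- (l1 * x)))
   + p1 * plogr (exp (- (l1 * x))) (p0 * exp (- (l0 * x)) + p1 * exp (- (l1 * x)))) / x)
    (at_right 0) (locally 0).
Proof.
  intros H0 H1 Hs.
  set (g := fun x => p0 * (exp (- (l0 * x)) * (- (l0 * x) - ln (p0 * exp (- (l0 * x)) + p1 * exp (- (l1 * x)))))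
     + p1 * (exp (- (l1 * x)) * (- (l1 * x) - ln (p0 * exp (- (l0 * x)) + p1 * exp (- (l1 * x)))))).
  assert (Hg : is_derive g 0 0).
  { unfold g. auto_derive.
    - rewrite !Rmult_0_r, !Ropp_0, !exp_0. lra.
    - rewrite !Rmult_0_r, !Ropp_0, !exp_0. rewrite !Rmult_1_r, Hs, ln_1.
      rewrite Rinv_1. replace p1 with (1 - p0) by lra. ring. }
  assert (Hg0 : g 0 = 0).
  { unfold g. rewrite !Rmult_0_r, !Ropp_0, !exp_0, !Rmult_1_r, Hs, ln_1. ring. }
  eapply filterlim_ext; [|exact (dq g 0 Hg Hg0)].
  intros x. f_equal. unfold g.
  assert (E0 := exp_pos (- (l0 * x))). assert (E1 := exp_pos (- (l1 * x))).
  assert (0 < p0 * exp (- (l0 * x)) + p1 * exp (- (l1 * x))) by nra.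
  unfold plogr.
  destruct (Req_EM_T (exp (- (l0 * x))) 0); [lra|].
  destruct (Req_EM_T (exp (- (l1 * x))) 0); [lra|].
  rewrite !ln_div, !ln_exp by lra. ring.
Qed.

Lemma lim_MI S0 S1 p0 p1 l : 0 < p0 -> 0 < p1 -> p0 + p1 = 1 ->
  filterlim (fun x => MI_l S0 S1 p0 p1 l x / x) (at_right 0) (locally (LimF p0 p1 (S0 + l) (S1 + l))).
Proof.
  intros H0 H1 Hs.
  set (l0 := rate S0 l). set (l1 := rate S1 l).
  assert (L0 : 0 <= l0) by apply pow2_ge_0.
  assert (L1 : 0 <= l1) by apply pow2_ge_0.
  set (P := fun x => p0 * (1 - exp (- (l0 * x))) + p1 * (1 - exp (- (l1 * x)))).
  assert (HP : is_derive P 0 (p0 * l0 + p1 * l1)).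
  { unfold P. auto_derive; auto. rewrite !Rmult_0_r, !Ropp_0, !exp_0. ring. }
  assert (P0 : P 0 = 0) by (unfold P; rewrite !Rmult_0_r, !Ropp_0, !exp_0; ring).
  assert (Ppos : forall lam, (lam = l0 \/ lam = l1) -> 0 < lam -> forall x, 0 < x -> 0 < P x).
  { intros lam Hlam Hl x Hx. unfold P.
    assert (A0 := exp_le1 l0 x L0 ltac:(lra)). assert (A1 := exp_le1 l1 x L1 ltac:(lra)).
    assert (E : exp (- (lam * x)) < 1) by (rewrite <- exp_0; apply exp_increasing; nra).
    destruct Hlam as [ -> | -> ]; nra. }
  assert (Lbp : forall lam, (lam = l0 \/ lam = l1) -> 0 < lam -> 0 < p0 * l0 + p1 * l1).
  { intros lam [ -> | -> ] Hl; nra. }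
  assert (Y1a := lim_y1 l0 P _ L0 (Lbp l0 (or_introl eq_refl)) HP P0 (Ppos l0 (or_introl eq_refl))).
  assert (Y1b := lim_y1 l1 P _ L1 (Lbp l1 (or_intror eq_refl)) HP P0 (Ppos l1 (or_intror eq_refl))).
  assert (Y0 := lim_y0 p0 p1 l0 l1 H0 H1 Hs).
  assert (Hlim := lim_plus _ _ _ _ _ Y0 (lim_plus _ _ _ _ _
     (lim_mult _ _ _ _ _ (filterlim_const p0) Y1a) (lim_mult _ _ _ _ _ (filterlim_const p1) Y1b))).
  replace (LimF p0 p1 (S0 + l) (S1 + l)) with (0 + (p0 * plogr l0 (p0 * l0 + p1 * l1) + p1 * plogr l1 (p0 * l0 + p1 * l1))) by (unfold LimF, l0, l1, rate; ring).
  eapply filterlim_ext; [|exact Hlim].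
  intros x. simpl. unfold MI_l, binMI, p_click, P. fold l0 l1.
  replace (1 - (1 - exp (- (l0 * x)))) with (exp (- (l0 * x))) by ring.
  replace (1 - (1 - exp (- (l1 * x)))) with (exp (- (l1 * x))) by ring.
  unfold Rdiv. ring.
Qed.


Theorem lemma1 (S0 S1 pi0 pi1 : R) :
  0 < pi0 -> 0 < pi1 -> pi0 + pi1 = 1 -> pi0 <> pi1 ->
  let lstar := (S0 * pi0 - S1 * pi1) / (pi1 - pi0) in
  (forall l : R, exists L Lstar : R,
     filterlim (fun Delta => MI_l S0 S1 pi0 pi1 l Delta / Delta)
       (at_right 0) (locally L) /\
     filterlim (fun Delta => MI_l S0 S1 pi0 pi1 lstar Delta / Delta)
       (at_right 0) (locally Lstar) /\
     L <= Lstar)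
  /\ pi0 * sqrt (rate S0 lstar) = pi1 * sqrt (rate S1 lstar).
Proof.
  intros H0 H1 Hs Hne lstar.
  assert (Hd : pi1 - pi0 <> 0) by lra.
  set (c := (S0 - S1) / (pi1 - pi0)).
  assert (E0 : S0 + lstar = pi1 * c) by (unfold lstar, c; field; auto).
  assert (E1 : S1 + lstar = pi0 * c) by (unfold lstar, c; field; auto).
  assert (Ec : (pi1 - pi0) * c = S0 - S1) by (unfold c; field; auto).
  split.
  - intros l. exists (LimF pi0 pi1 (S0 + l) (S1 + l)), (LimF pi0 pi1 (S0 + lstar) (S1 + lstar)).
    split; [apply lim_MI; auto|split; [apply lim_MI; auto|]].
    apply Rle_trans with (K pi0 pi1 * ((S0 + l) - (S1 + l)) ^ 2).
    { apply main_ineq2; auto. }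
    replace ((S0 + l) - (S1 + l)) with (S0 - S1) by ring.
    rewrite E0, E1.
    destruct (Rlt_dec pi0 pi1) as [Hlt|Hlt].
    + rewrite LimF_opt by auto. rewrite Ec. lra.
    + rewrite LimF_sym, K_sym by auto. rewrite LimF_opt by lra.
      replace ((pi0 - pi1) * c) with (- (S0 - S1)) by lra. replace ((- (S0 - S1)) ^ 2) with ((S0 - S1) ^ 2) by ring. lra.
  - unfold rate. rewrite E0, E1. rewrite <- !Rsqr_pow2, !sqrt_Rsqr_abs, !Rabs_mult.
    rewrite (Rabs_pos_eq pi0), (Rabs_pos_eq pi1) by lra. ring.
Qed.
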